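(* Let $J\ge2$. For any $\delta_1>0$ and $\vec\lambda\in(0,\infty)^J$ with $$\min_{\emptyset\ne\mathcal I\subseteq\{1,\dots,J\}}\Big(\frac{|A^*_{\mathcal I}\vec\lambda^D_{\mathcal I}|}{|\vec\lambda^D_{\mathcal I}|}+\sum_{i\notin\mathcal I}\frac{\lambda_i}{\lambda_{\max}}\Big)\ge\delta_1,$$ we have $\sum_{i=1}^J(A^*\vec\lambda^D)_i^2\lambda_i^{2D-2}\simeq_{\delta_1}\lambda_{\max}^{4D-2}$ and $\lambda_{\mathrm{max2}}\gtrsim\delta_1\lambda_{\max}$.
   Context: $N\ge7$, $D=\frac{N-2}2$. A configuration: signs $\iota_i\in\{\pm1\}$ and distinct points $z_1^*,\dots,z_J^*\in\mathbb{R}^N$. $A^*_{ij}=\mathbf 1_{i\ne j}\kappa_0\kappa_\infty\frac{\iota_i\iota_j}{|z_i^*-z_j^*|^{N-2}}$ with fixed positive constants $\kappa_0,\kappa_\infty$. $A^*_{\mathcal I}$ is the submatrix of $A^*$ with rows and columns in $\mathcal I$; $\vec\lambda^D_{\mathcal I}=(\lambda_i^D)_{i\in\mathcal I}$, $\vec\lambda^D=(\lambda_i^D)_i$. $\lambda_{\max}$, $\lambda_{\mathrm{max2}}$ are the largest and second largest of $\lambda_1,\dots,\lambda_J$. Implicit constants may depend on $N,J$ and the configuration (and on $\delta_1$ where indicated), not on $\vec\lambda$. *)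

(* Defs.v *)
From HB Require Import structures.
From mathcomp Require Import all_boot all_order all_algebra.
From mathcomp Require Import all_classical all_reals all_analysis.
Set Implicit Arguments. Unset Strict Implicit. Unset Printing Implicit Defensive.
Import Order.TTheory GRing.Theory Num.Theory.
Local Open Scope ring_scope.

Section Defs.
Variable R : realType.

Definition Dexp (N : nat) : R := (N%:R - 2) / 2.

Definition eucl_dist (N : nat) (x y : 'I_N -> R) : R :=
  Num.sqrt (\sum_(k < N) (x k - y k) ^+ 2).

Definition Astar (N J : nat) (kappa0 kappaInf : R) (iota : 'I_J -> R)
    (z : 'I_J -> 'I_N -> R) (i j : 'I_J) : R :=
  if i != j then kappa0 * kappaInf * iota i * iota j / (eucl_dist (z i) (z j)) ^+ (N - 2)
  else 0.

Definition lamD (N J : nat) (lam : 'I_J -> R) (i : 'I_J) : R := lam i `^ Dexp N.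

Definition normI (J : nat) (I : {set 'I_J}) (v : 'I_J -> R) : R :=
  Num.sqrt (\sum_(i in I) v i ^+ 2).

Definition subMulVec (J : nat) (A : 'I_J -> 'I_J -> R) (I : {set 'I_J})
    (v : 'I_J -> R) (i : 'I_J) : R := \sum_(j in I) A i j * v j.

Definition sorted_vals (J : nat) (lam : 'I_J -> R) : seq R :=
  sort (fun x y : R => y <= x) [seq lam i | i <- enum 'I_J].

Definition lam_max (J : nat) (lam : 'I_J -> R) : R := nth 0 (sorted_vals lam) 0.
Definition lam_max2 (J : nat) (lam : 'I_J -> R) : R := nth 0 (sorted_vals lam) 1.

Definition minTerm (N J : nat) (A : 'I_J -> 'I_J -> R) (lam : 'I_J -> R)
    (I : {set 'I_J}) : R :=
  normI I (subMulVec A I (lamD N lam)) / normI I (lamD N lam)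
  + \sum_(i in ~: I) lam i / lam_max lam.

Definition mainSum (N J : nat) (A : 'I_J -> 'I_J -> R) (lam : 'I_J -> R) : R :=
  \sum_(i < J) (\sum_(j < J) A i j * lamD N lam j) ^+ 2 * lam i `^ (2 * Dexp N - 2).

End Defs.

(* Main.v *)
Require Import Defs.
From HB Require Import structures.
From mathcomp Require Import all_boot all_order all_algebra.
From mathcomp Require Import all_classical all_reals all_analysis.
Import Order.TTheory GRing.Theory Num.Theory.
From mathcomp Require Import ring lra.
Set Implicit Arguments. Unset Strict Implicit. Unset Printing Implicit Defensive.
Local Open Scope ring_scope.

Section Aux.
Variable R : realType.

Let geR : rel R := fun x y : R => y <= x.

Lemma sv_size J (lam : 'I_J -> R) : size (sorted_vals lam) = J.
Proof. by rewrite /sorted_vals size_sort size_map size_enum_ord. Qed.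

Lemma sv_sorted J (lam : 'I_J -> R) : sorted geR (sorted_vals lam).
Proof. apply: sort_sorted => x y; rewrite /geR; exact: le_total. Qed.

Lemma sv_nth_le J (lam : 'I_J -> R) k l : (k <= l < J)%N ->
  nth 0 (sorted_vals lam) l <= nth 0 (sorted_vals lam) k.
Proof.
move=> /andP[kl lJ].
have tr : transitive geR by move=> y x z; rewrite /geR => h1 h2; exact: le_trans h2 h1.
have rf : reflexive geR by move=> x; rewrite /geR.
have := sorted_leq_nth tr rf 0 (sv_sorted lam).
move=> /(_ k l); rewrite !inE sv_size; apply => //; exact: leq_ltn_trans lJ.
Qed.

Lemma sv_sum J (lam : 'I_J -> R) :
  \sum_(i < J) lam i = \sum_(x <- sorted_vals lam) x.
Proof.
rewrite /sorted_vals (perm_big _ (permEl (perm_sort _ _))) big_map.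
by rewrite big_enum.
Qed.

Lemma lam_maxP J (lam : 'I_J -> R) : (0 < J)%N ->
  exists m, lam_max lam = lam m /\ forall i, lam i <= lam m.
Proof.
move=> J0.
have : nth 0 (sorted_vals lam) 0 \in sorted_vals lam by rewrite mem_nth // sv_size.
rewrite /sorted_vals (perm_mem (permEl (perm_sort _ _))) => /mapP[m _ hm].
exists m; split; first by rewrite /lam_max /sorted_vals hm.
move=> i; rewrite -hm.
have : lam i \in sorted_vals lam.
  by rewrite /sorted_vals (perm_mem (permEl (perm_sort _ _))) map_f // mem_enum.
move=> /(nthP 0)[k]; rewrite sv_size => kJ <-.
exact: sv_nth_le.
Qed.

Lemma lam_max2_sum J (lam : 'I_J -> R) : (1 < J)%N ->
  \sum_(i < J) lam i <= lam_max lam + (J.-1)%:R * lam_max2 lam.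
Proof.
move=> J1; rewrite sv_sum (big_nth 0) sv_size big_ltn ?(ltn_trans _ J1) //.
rewrite lerD2l /lam_max2 mulr_natl -(subn1 J) -sumr_const_nat.
rewrite big_nat [X in _ <= X]big_nat.
apply: ler_sum => k /andP[k1 kJ].
apply: sv_nth_le; rewrite k1 /=.
exact: kJ.
Qed.


Lemma part1 (N : nat) J (A : 'I_J -> 'I_J -> R) : (2 <= J)%N -> (forall i, A i i = 0) ->
  forall (delta1 : R) (lam : 'I_J -> R), 0 < delta1 -> (forall i, 0 < lam i) ->
  (forall I : {set 'I_J}, I != finset.set0 -> delta1 <= minTerm N A lam I) ->
  (J.-1)%:R^-1 * delta1 * lam_max lam <= lam_max2 lam.
Proof.
move=> J2 A0 d lam d0 lam0 H.
have [m [Lm Hm]] := lam_maxP lam (ltnW J2).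
have m0 : [set m] != finset.set0 by apply/set0Pn; exists m; rewrite finset.in_set1.
have := H _ m0.
rewrite /minTerm /normI /subMulVec big_set1 big_set1 A0 mul0r expr0n sqrtr0 mul0r add0r.
rewrite -mulr_suml.
have -> : \sum_(i in ~: [set m]) lam i = \sum_i lam i - lam m.
  rewrite [X in _ = X - _](bigD1 m) //= addrC addrK.
  by apply: eq_bigl => i; rewrite finset.in_setC finset.in_set1.
have L0 : 0 < lam_max lam by rewrite Lm.
rewrite ler_pdivlMr // => h.
have j0 : 0 < (J.-1)%:R :> R by rewrite ltr0n; case: J J2 {A A0 lam lam0 H m Lm Hm m0 L0 h} => [|[|]].
rewrite -mulrA ler_pdivrMl //.
have := lam_max2_sum lam J2; rewrite Lm in h *; lra.
Qed.


Lemma sum_le_const J (P : pred 'I_J) (F : 'I_J -> R) c : 0 <= c ->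
  (forall i, P i -> F i <= c) -> \sum_(i | P i) F i <= J%:R * c.
Proof.
move=> c0 h; rewrite big_mkcond /=.
apply: (@le_trans _ _ (\sum_(i < J) c)).
  by apply: ler_sum => i _; case: ifP => // /h.
by rewrite sumr_const card_ord mulr_natl.
Qed.

Lemma sum_sub_le J (P : pred 'I_J) (F : 'I_J -> R) :
  (forall i, 0 <= F i) -> \sum_(i | P i) F i <= \sum_i F i.
Proof.
move=> h; rewrite big_mkcond /=; apply: ler_sum => i _; case: ifP => //.
Qed.

Lemma le_sum1 J (F : 'I_J -> R) j : (forall k, 0 <= F k) -> F j <= \sum_k F k.
Proof. by move=> h; rewrite (bigD1 j) //= lerDl sumr_ge0. Qed.

Lemma sq_le (x y : R) : 0 <= x -> x <= y -> x ^+ 2 <= y ^+ 2.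
Proof. move=> x0 xy; nra. Qed.

Lemma powRD' (x r s : R) : 0 < x -> x `^ (r + s) = x `^ r * x `^ s.
Proof. by move=> x0; rewrite powRD // (gt_eqF x0) implybT. Qed.

Lemma Dfacts (N : nat) : (7 <= N)%N -> 1 <= Dexp R N /\ 0 <= 2 * Dexp R N - 2.
Proof.
move=> N7; have : (7 : R) <= N%:R by rewrite (ler_nat R 7 N).
rewrite /Dexp; move=> h; split; lra.
Qed.

Lemma part2 (N : nat) J (A : 'I_J -> 'I_J -> R) : (7 <= N)%N -> (2 <= J)%N ->
  forall delta1 : R, 0 < delta1 ->
     exists c C : R, 0 < c /\ 0 < C /\
     forall lam : 'I_J -> R, (forall i, 0 < lam i) ->
     (forall I : {set 'I_J}, I != finset.set0 -> delta1 <= minTerm N A lam I) ->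
     c * lam_max lam `^ (4 * Dexp R N - 2) <= mainSum N A lam /\
     mainSum N A lam <= C * lam_max lam `^ (4 * Dexp R N - 2).
Proof.
move=> N7 J2 d d0.
have [D1 D2] := Dfacts N7.
set D := Dexp R N in D1 D2 *.
have D0 : 0 <= D by apply: le_trans D1; exact: ler01.
set M : R := 1 + \sum_i \sum_j `|A i j|.
have HM : forall i j, `|A i j| <= M.
  move=> i j; rewrite /M.
  have h1 : `|A i j| <= \sum_j0 `|A i j0| by apply: (@le_sum1 _ (fun k => `|A i k|)).
  have h2 : \sum_j0 `|A i j0| <= \sum_i0 \sum_j0 `|A i0 j0|.
    by apply: (@le_sum1 _ (fun k => \sum_j0 `|A k j0|)) => k; rewrite sumr_ge0.
  have h3 : 0 <= \sum_i0 \sum_j0 `|A i0 j0| by rewrite sumr_ge0 // => k _; rewrite sumr_ge0.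
  lra.
have M1 : 1 <= M by rewrite /M lerDl sumr_ge0 // => k _; rewrite sumr_ge0.
set Jr : R := J%:R.
have J1 : 1 <= Jr by rewrite /Jr (ler_nat R 1 J) ltnW.
set K := Jr * Jr * M.
have JK : Jr <= K by rewrite /K; nra.
have K0 : 0 < K by lra.
set eps := Num.min 1 (d / (4 * K)).
have e1 : eps <= 1 by rewrite /eps ge_min lexx.
have e2' : eps <= d / (4 * K) by rewrite /eps ge_min lexx orbT.
have e2 : eps * (4 * K) <= d by rewrite -ler_pdivlMr // mulr_gt0.
have e0 : 0 < eps by rewrite /eps lt_min ltr01 /= divr_gt0 // mulr_gt0.
have eJ : Jr * eps <= d / 2.
  have : Jr * eps <= K * eps by rewrite ler_wpM2r // ltW.
  lra.
have eJ2 : Jr * (Jr * M * eps) ^+ 2 <= (d / 4) ^+ 2.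
  have h1 : Jr * (Jr * M * eps) ^+ 2 <= (Jr * (Jr * M * eps)) ^+ 2.
    have : 0 <= (Jr * M * eps) ^+ 2 by rewrite sqr_ge0.
    rewrite exprMn; nra.
  apply: le_trans h1 _; apply: sq_le.
    by rewrite !mulr_ge0 // ltW // (lt_le_trans ltr01).
  have : Jr * (Jr * M * eps) = K * eps by rewrite /K; ring.
  lra.
exists (eps `^ (2 * D - 2) * (d ^+ 2 / 16)), (Jr * (Jr * M) ^+ 2).
split; first by rewrite mulr_gt0 ?powR_gt0 // divr_gt0 ?exprn_gt0.
split; first by rewrite mulr_gt0 ?exprn_gt0 ?mulr_gt0 // (lt_le_trans ltr01).
move=> lam lam0 H.
have [m [Lm Hm]] := lam_maxP lam (ltnW J2).
rewrite Lm.
set L := lam m.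
have L0 : 0 < L := lam0 m.
set P := L `^ D.
set Q := L `^ (2 * D - 2).
have P0 : 0 < P by rewrite powR_gt0.
have Q0 : 0 < Q by rewrite powR_gt0.
have -> : L `^ (4 * D - 2) = P * P * Q.
  have -> : 4 * D - 2 = D + D + (2 * D - 2) by ring.
  by rewrite powRD' // powRD'.
set v := lamD N lam.
have v0 : forall j, 0 <= v j by move=> j; exact: powR_ge0.
have vP : forall j, v j <= P.
  by move=> j; rewrite /v /lamD ge0_ler_powR ?nnegrE ?(ltW (lam0 _)) ?(ltW L0) // (le_trans _ D1).
rewrite /mainSum -/D -/v.
split; last first.
  have hb : forall i, `|\sum_j A i j * v j| <= Jr * M * P.
    move=> i; apply: le_trans (ler_norm_sum _ _ _) _.
    rewrite -mulrA; apply: sum_le_const => [|j _]; first by rewrite mulr_ge0 ?(ltW P0) // (le_trans _ M1).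
    by rewrite normrM (ger0_norm (v0 j)) ler_pM.
  apply: le_trans (_ : \sum_(i < J) ((Jr * M * P) ^+ 2 * Q) <= _).
    apply: ler_sum => i _; apply: ler_pM; rewrite ?sqr_ge0 ?powR_ge0 //.
      have := hb i; rewrite ler_norml => /andP[h1 h2].
      have : 0 <= Jr * M * P + \sum_j A i j * v j by lra.
      have : 0 <= Jr * M * P - \sum_j A i j * v j by lra.
      nra.
    by rewrite ge0_ler_powR ?nnegrE ?(ltW (lam0 _)) ?(ltW L0).
  rewrite sumr_const card_ord mulr_natl -/Jr le_eqVlt; apply/orP; left; apply/eqP; ring.
set I := [set i | eps * L <= lam i].
have mI : m \in I by rewrite /I finset.inE ler_piMl // ltW.
have I0 : I != finset.set0 by apply/set0Pn; exists m.
have h := H I I0; rewrite /minTerm -/v in h.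
have hS : \sum_(i in ~: I) lam i / lam_max lam <= Jr * eps.
  apply: sum_le_const => [|i]; first exact: ltW.
  rewrite finset.in_setC /I finset.inE -ltNge Lm => hi.
  by rewrite ler_pdivrMr // ltW.
set a := subMulVec A I v.
have hV : P <= normI I v.
  rewrite /normI -(ger0_norm (ltW P0)) -sqrtr_sqr ler_sqrt ?sumr_ge0 //; last by move=> *; rewrite sqr_ge0.
  rewrite (bigD1 m) //= lerDl sumr_ge0 // => *; exact: sqr_ge0.
have nV0 : 0 < normI I v by apply: lt_le_trans hV.
have hA : d / 2 * P <= normI I a.
  have : d / 2 <= normI I a / normI I v by lra.
  rewrite ler_pdivlMr // => h'; apply: le_trans h'.
  by rewrite ler_wpM2l // divr_ge0 // ltW.
have hSA : (d / 2 * P) ^+ 2 <= \sum_(i in I) a i ^+ 2.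
  rewrite -(@sqr_sqrtr _ (\sum_(i in I) a i ^+ 2)); last by rewrite sumr_ge0 // => *; rewrite sqr_ge0.
  by apply: sq_le => //; rewrite mulr_ge0 ?divr_ge0 ?ltW.
set t := fun i => \sum_(j | j \notin I) A i j * v j.
have hbt : forall i, \sum_j A i j * v j = a i + t i.
  by move=> i; rewrite (bigID (fun j => j \in I)) /=.
have ht : forall i, `|t i| <= Jr * M * eps * P.
  move=> i; apply: le_trans (ler_norm_sum _ _ _) _.
  rewrite -!mulrA; apply: sum_le_const => [|j]; first by rewrite !mulr_ge0 ?(ltW P0) ?(ltW e0) // (le_trans _ M1).
  rewrite /I finset.inE -ltNge => hj.
  rewrite normrM (ger0_norm (v0 j)) ler_pM //.
  have h1 : v j <= (eps * L) `^ D.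
    by rewrite /v /lamD ge0_ler_powR ?D0 ?nnegrE ?(ltW (lam0 _)) ?mulr_ge0 ?(ltW L0) ?(ltW e0) ?(ltW hj).
  rewrite powRM ?(ltW L0) ?(ltW e0) // -/P in h1.
  apply: le_trans h1 _; rewrite ler_wpM2r ?(ltW P0) //.
  by apply: ge1r_powR => //; rewrite e0 e1.
have hB : (d / 2 * P) ^+ 2 / 2 - (d / 4) ^+ 2 * P ^+ 2
          <= \sum_(i in I) (\sum_j A i j * v j) ^+ 2.
  apply: (@le_trans _ _ (\sum_(i in I) (a i ^+ 2 / 2 - t i ^+ 2))).
    rewrite sumrB -mulr_suml; apply: lerB; first by rewrite ler_wpM2r.
    apply: le_trans (_ : Jr * (Jr * M * eps * P) ^+ 2 <= _).
      apply: sum_le_const => [|i _]; first exact: sqr_ge0.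
      have := ht i; rewrite ler_norml => /andP[h1 h2].
      have : 0 <= Jr * M * eps * P + t i by lra.
      have : 0 <= Jr * M * eps * P - t i by lra.
      nra.
    rewrite (_ : Jr * (Jr * M * eps * P) ^+ 2 = (Jr * (Jr * M * eps) ^+ 2) * P ^+ 2); last by ring.
    by rewrite ler_wpM2r ?sqr_ge0.
  apply: ler_sum => i _; rewrite hbt; have := sqr_ge0 (a i / 2 + t i); nra.
apply: le_trans (_ : \sum_(i in I) (\sum_j A i j * v j) ^+ 2 * (eps `^ (2 * D - 2) * Q) <= _).
  rewrite -mulr_suml.
  have hE : 0 <= eps `^ (2 * D - 2) * Q by rewrite mulr_ge0 ?powR_ge0.
  apply: le_trans (ler_wpM2r hE hB).
  by rewrite le_eqVlt; apply/orP; left; apply/eqP; field.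
have s1 : \sum_(i in I) (\sum_j A i j * v j) ^+ 2 * (eps `^ (2 * D - 2) * Q)
   <= \sum_(i in I) (\sum_j A i j * v j) ^+ 2 * lam i `^ (2 * D - 2).
  apply: ler_sum => i; rewrite /I finset.inE => hi.
  rewrite ler_wpM2l ?sqr_ge0 // -powRM ?(ltW e0) ?(ltW L0) //.
  by rewrite ge0_ler_powR ?D2 ?nnegrE ?(ltW (lam0 _)) ?mulr_ge0 ?(ltW L0) ?(ltW e0).
have s2 : \sum_(i in I) (\sum_j A i j * v j) ^+ 2 * lam i `^ (2 * D - 2)
   <= \sum_i (\sum_j A i j * v j) ^+ 2 * lam i `^ (2 * D - 2).
  apply: sum_sub_le => i; rewrite mulr_ge0 ?sqr_ge0 ?powR_ge0 //.
apply: le_trans s1 s2.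
Qed.
End Aux.

Unset Implicit Arguments.
Theorem lemma4p2 (R : realType) (N J : nat) (kappa0 kappaInf : R)
    (iota : 'I_J -> R) (z : 'I_J -> 'I_N -> R) :
  (7 <= N)%N -> (2 <= J)%N -> 0 < kappa0 -> 0 < kappaInf ->
  (forall i, iota i = 1 \/ iota i = -1) ->
  injective z ->
  let A := Astar kappa0 kappaInf iota z in
  (* lambda_max2 >~ delta1 lambda_max, constant independent of delta1 *)
  (exists c : R, 0 < c /\
     forall (delta1 : R) (lam : 'I_J -> R), 0 < delta1 -> (forall i, 0 < lam i) ->
     (forall I : {set 'I_J}, I != finset.set0 -> delta1 <= minTerm N A lam I) ->
     c * delta1 * lam_max lam <= lam_max2 lam) /\
  (* sum ~_{delta1} lambda_max^{4D-2} *)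
  (forall delta1 : R, 0 < delta1 ->
     exists c C : R, 0 < c /\ 0 < C /\
     forall lam : 'I_J -> R, (forall i, 0 < lam i) ->
     (forall I : {set 'I_J}, I != finset.set0 -> delta1 <= minTerm N A lam I) ->
     c * lam_max lam `^ (4 * Dexp R N - 2) <= mainSum N A lam /\
     mainSum N A lam <= C * lam_max lam `^ (4 * Dexp R N - 2)).
Proof.
move=> N7 J2 k0 ki hiota hz A.
have A0 : forall i, A i i = 0 by move=> i; rewrite /A /Astar eqxx.
split.
  exists (J.-1)%:R^-1; split.
    by rewrite invr_gt0 ltr0n; case: J J2 {iota z hiota hz A A0} => [|[|]].
  move=> d lam d0 lam0 H; exact: (part1 J2 A0 d0 lam0 H).
move=> d d0; exact: part2.
Qed.
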